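(* The function $v$ satisfies, and is determined by, the following conditions, valid for every integer $n\ge 0$: \begin{itemize} \item $v(0)=0$; \item $v(2n+1)=v(n)$; \item $v(4n+2)=v(2n)+v(n)+b(n)-1$; \item $v(4n+4)=v(2n+2)+v(n)+b(n)-1$. \end{itemize} Equivalently, since $a(n)=v(n)+b(n)-1$, the last two conditions read $v(4n+2)=v(2n)+a(n)$ and $v(4n+4)=v(2n+2)+a(n)$.
   Context: Let $\Sigma^*$ denote the free monoid of finite words over the alphabet $\{0,1,2\}$, with concatenation as product; the empty word is allowed. A word $x_0x_1\cdots x_k\in\Sigma^*$ with $x_0\neq 0$ is a hyperbinary expansion of the nonnegative integer $\sum_{i=0}^k x_i2^{k-i}$. The empty word is the unique hyperbinary expansion of $0$. Write $\mathcal H(n)$ for the set of hyperbinary expansions of $n$, and $b(n)=|\mathcal H(n)|$. The graph $A(n)$ is the directed graph with vertex set $\mathcal H(n)$. Its arcs are the single-step reductions between elements of $\mathcal H(n)$, each carrying one of two labels: \begin{itemize} \item pairs $(\mathbf x02\mathbf y,\mathbf x10\mathbf y)$ and $(2\mathbf y,10\mathbf y)$ are arcs labeled $\to$; \item pairs $(\mathbf x12\mathbf y,\mathbf x20\mathbf y)$ are arcs labeled $\twoheadrightarrow$; \end{itemize} here $\mathbf x,\mathbf y\in\Sigma^*$ and both words must belong to $\mathcal H(n)$. $A(n)$ is connected. Let $a(n)$ be the number of arcs of $A(n)$, and let $v(n)=a(n)-b(n)+1$ be its cyclomatic number, i.e. the cyclomatic number of the underlying undirected graph. *)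

(* Defs.v *)
From mathcomp Require Import all_boot all_algebra.
Set Implicit Arguments. Unset Strict Implicit. Unset Printing Implicit Defensive.
Import GRing.Theory Num.Theory.

(* Words over {0,1,2} are represented as seq nat whose letters are <= 2. *)

(* Value of a word x_0 ... x_k : sum x_i 2^(k-i) (Horner, most significant first). *)
Definition hval (w : seq nat) : nat := foldl (fun acc d => acc * 2 + d) 0 w.

Definition is_hyper (n : nat) (w : seq nat) : bool :=
  [&& all (fun d => d <= 2) w,
      (if w is d :: _ then d != 0 else true) & hval w == n].

Fixpoint words (k : nat) : seq (seq nat) :=
  if k is k'.+1 then [seq d :: w | d <- [:: 0; 1; 2], w <- words k'] else [:: [::]].

(* H(n): a hyperbinary expansion of n has length <= n (for n >= 1 the leading
   digit is nonzero, so a word of length k+1 has value >= 2^k >= k+1; for n = 0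
   only the empty word), so filtering words of length <= n lists all of H(n),
   each exactly once. *)
Definition H (n : nat) : seq (seq nat) :=
  [seq w <- flatten [seq words k | k <- iota 0 n.+1] | is_hyper n w].

Definition b (n : nat) : nat := size (H n).

(* (x p y, x q y) for some words x, y *)
Definition infix_step (p q : seq nat) (u w : seq nat) : bool :=
  has (fun i => (u == take i u ++ p ++ drop (i + size p) u) &&
                (w == take i u ++ q ++ drop (i + size p) u))
      (iota 0 (size u).+1).

(* arcs labeled -> : (x02y, x10y) and (2y, 10y) *)
Definition arc_to (u w : seq nat) : bool :=
  infix_step [:: 0; 2] [:: 1; 0] u w
  || ((u == 2 :: behead u) && (w == [:: 1, 0 & behead u])).

(* arcs labeled ->> : (x12y, x20y) *)
Definition arc_tto (u w : seq nat) : bool := infix_step [:: 1; 2] [:: 2; 0] u w.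

(* number of arcs of A(n) (the two labels give disjoint sets of pairs) *)
Definition a (n : nat) : nat :=
  \sum_(u <- H n) count (fun w => arc_to u w) (H n)
  + \sum_(u <- H n) count (fun w => arc_tto u w) (H n).

Definition v (n : nat) : int := (a n)%:Z - (b n)%:Z + 1.

(* Main.v *)
Require Import Defs.
From mathcomp Require Import all_boot all_algebra.
From mathcomp Require Import zify.
Import GRing.Theory Num.Theory.

Lemma foldl_hval acc w :
  foldl (fun acc d => acc * 2 + d) acc w = acc * 2 ^ size w + hval w.
Proof.
elim: w acc => [|e w IH] acc /=; first by rewrite /hval /= muln1 addn0.
rewrite /hval /= IH (IH (0*2+e)) expnS; nia.
Qed.

Lemma hval_cons d w : hval (d :: w) = d * 2 ^ size w + hval w.
Proof. by rewrite {1}/hval /= foldl_hval. Qed.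

Lemma hval_rcons u d : hval (rcons u d) = hval u * 2 + d.
Proof. by rewrite /hval -cats1 foldl_cat. Qed.

Lemma is_hyper_size n w : is_hyper n w -> size w <= n.
Proof.
case: w => [//|d w] /and3P [_ d0 /eqP <-] /=.
rewrite hval_cons.
have := ltn_expl (size w) (isT : 1 < 2).
have : 1 <= d by rewrite lt0n.
nia.
Qed.

Lemma words_S k : words k.+1 = [seq d :: w | d <- [:: 0; 1; 2], w <- words k].
Proof. by []. Qed.

Lemma mem_words k w : (w \in words k) = (size w == k) && all (fun d => d <= 2) w.
Proof.
elim: k w => [|k IH] w; first by case: w.
rewrite words_S; apply/allpairsP/idP => [[[x y] /= [Hx Hy ->]]|].
  move: Hx; rewrite /= eqSS; rewrite IH in Hy; case/andP: Hy => -> ->; rewrite !inE !andbT.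
  by move=> /or3P [] /eqP ->.
case: w => [//|d w] /andP [Hs /andP [Hd Ha]]; exists (d, w); split => //=.
  by rewrite !inE; move: Hd; clear; case: d => [|[|[|]]].
by rewrite IH -(eqSS (size w)) Hs.
Qed.

Lemma uniq_words k : uniq (words k).
Proof.
elim: k => [|k IH] //.
rewrite words_S; apply: allpairs_uniq => //. move=> [x y] [x' y'] _ _ /= [-> ->] //.
Qed.

Lemma count_H n w : count_mem w (H n) = is_hyper n w.
Proof.
rewrite /H count_filter.
case Hw: (is_hyper n w); last first.
  rewrite (eq_count (a2 := pred0)) ?count_pred0 // => x /=.
  by case: eqP => // ->; rewrite Hw.
rewrite (eq_count (a2 := pred1 w)); last first.
  by move=> x /=; case: eqP => // ->; rewrite Hw.
rewrite count_flatten -map_comp.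
rewrite (eq_map (g := fun k => nat_of_bool (k == size w))); last first.
  move=> k /=; rewrite count_uniq_mem ?uniq_words // mem_words eq_sym.
  by move: Hw => /and3P [-> _ _]; rewrite andbT.
rewrite sumn_count (eq_count (a2 := pred1 (size w))); last by move=> x /=.
rewrite count_uniq_mem ?iota_uniq // mem_iota /= add0n ltnS.
by rewrite is_hyper_size.
Qed.


Definition hd0 (u : seq nat) := if u is e :: _ then e != 0 else true.

Lemma is_hyper_rcons n u d : is_hyper n (rcons u d) =
  [&& all (fun d => d <= 2) u, d <= 2, hd0 u, (u != [::]) || (d != 0) & hval u * 2 + d == n].
Proof.
rewrite /is_hyper all_rcons hval_rcons.
case: u => [|e u] /=; lia.
Qed.

Lemma is_hyperE n u : is_hyper n u = [&& all (fun d => d <= 2) u, hd0 u & hval u == n].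
Proof. by []. Qed.

Lemma hval_nil u : u = [::] -> hval u = 0.
Proof. by move->. Qed.

Lemma is_hyper_odd m u d : is_hyper (2 * m + 1) (rcons u d) = (d == 1) && is_hyper m u.
Proof.
rewrite is_hyper_rcons is_hyperE.
case: (u =P [::]) => [/hval_nil|_]; lia.
Qed.

Lemma is_hyper_even m u d : is_hyper (2 * m + 2) (rcons u d) =
  ((d == 0) && is_hyper (m + 1) u) || ((d == 2) && is_hyper m u).
Proof.
rewrite is_hyper_rcons !is_hyperE.
case: (u =P [::]) => [/hval_nil|_]; lia.
Qed.

Lemma is_hyper_nil n : is_hyper n [::] = (n == 0).
Proof. by rewrite /is_hyper /= eq_sym. Qed.



Lemma count_map_rcons (s : seq (seq nat)) c u d :
  count_mem (rcons u d) (map (rcons^~ c) s) = (d == c) * count_mem u s.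
Proof.
rewrite count_map; case: (d =P c) => [->|nd].
  by rewrite /= ?mul1n; apply: eq_count => x /=; rewrite eqseq_rcons eqxx andbT.
transitivity 0; last by case: (d =P c).
rewrite (eq_count (a2 := pred0)) ?count_pred0 // => x /=.
by rewrite eqseq_rcons; case: eqP => //= _; apply/eqP => h; exact: nd (esym h).
Qed.

Lemma count_map_rcons_nil (s : seq (seq nat)) c :
  count_mem [::] (map (rcons^~ c) s) = 0.
Proof.
rewrite count_map (eq_count (a2 := pred0)) ?count_pred0 // => x /=.
by case: x.
Qed.

Lemma permC (s t : seq (seq nat)) : (forall w, count_mem w s = count_mem w t) -> perm_eq s t.
Proof. by move=> h; apply/allP => w _ /=; rewrite h. Qed.

Lemma H_odd m : perm_eq (H (2 * m + 1)) (map (rcons^~ 1) (H m)).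
Proof.
apply: permC => w; rewrite count_H.
case/lastP: w => [|u d]; first by rewrite count_map_rcons_nil is_hyper_nil addn1.
by rewrite count_map_rcons count_H is_hyper_odd; case: (d == 1); case: is_hyper.
Qed.

Lemma H_even m : perm_eq (H (2 * m + 2)) (map (rcons^~ 0) (H (m + 1)) ++ map (rcons^~ 2) (H m)).
Proof.
apply: permC => w; rewrite count_H count_cat.
case/lastP: w => [|u d]; first by rewrite !count_map_rcons_nil is_hyper_nil addn2.
rewrite !count_map_rcons !count_H is_hyper_even.
by case: d => [|[|[|d]]] //=; case: is_hyper.
Qed.


Lemma infix_stepP p q u w :
  reflect (exists x y, u = x ++ p ++ y /\ w = x ++ q ++ y) (infix_step p q u w).
Proof.
apply: (iffP hasP).
  move=> [i _ /andP [/eqP hu /eqP hw]].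
  by exists (take i u), (drop (i + size p) u).
move=> [x [y [-> ->]]]; exists (size x).
  by rewrite mem_iota !size_cat; lia.
rewrite take_size_cat // catA drop_size_cat ?size_cat // -catA.
by rewrite !eqxx.
Qed.

Lemma cat2 (x : seq nat) a b : x ++ [:: a; b] = rcons (rcons x a) b.
Proof. by rewrite -!cats1 -catA. Qed.

Lemma infix_same p q u w c :
  (forall z, last z p = 2) -> (forall z, last z q = 0) ->
  infix_step p q (rcons u c) (rcons w c) = infix_step p q u w.
Proof.
move=> hp hq; apply/infix_stepP/infix_stepP.
  move=> [x [y]]; case/lastP: y => [|y e] [hu hw].
    have := congr1 (last 0) hu; have := congr1 (last 0) hw.
    by rewrite !cats0 !last_rcons !last_cat hp hq => ->.
  move: hu hw; rewrite -!rcons_cat => /rcons_inj [-> _] /rcons_inj [-> _].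
  by exists x, y.
move=> [x [y [-> ->]]]; exists x, (rcons y c).
by rewrite !rcons_cat.
Qed.

Lemma lead_same u w c :
  ((rcons u c == 2 :: behead (rcons u c)) && (rcons w c == [:: 1, 0 & behead (rcons u c)]))
  = ((u == 2 :: behead u) && (w == [:: 1, 0 & behead u])).
Proof.
case: u => [|e u] /=.
  rewrite (_ : [:: 1; 0] = rcons [:: 1] 0) // eqseq_rcons.
  by case: c => [|[|[|c]]] //=; rewrite andbF.
rewrite (_ : [:: 1, 0 & rcons u c] = rcons [:: 1, 0 & u] c) // eqseq_rcons eqxx andbT.
by rewrite !eqseq_cons !eqxx.
Qed.

Lemma arc_to_same u w c : arc_to (rcons u c) (rcons w c) = arc_to u w.
Proof. by rewrite /arc_to infix_same // lead_same. Qed.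

Lemma arc_tto_same u w c : arc_tto (rcons u c) (rcons w c) = arc_tto u w.
Proof. by rewrite /arc_tto infix_same. Qed.

Lemma infix_cross p q u w c d : c != d ->
  infix_step p q (rcons u c) (rcons w d) ->
  exists x, rcons u c = x ++ p /\ rcons w d = x ++ q.
Proof.
move=> ncd /infix_stepP [x [y]]; case/lastP: y => [|y e] [hu hw].
  by exists x; rewrite -(cats0 p) -(cats0 q).
move: hu hw; rewrite -!rcons_cat => /rcons_inj [_ e1] /rcons_inj [_ e2].
by move: ncd; rewrite e1 e2 eqxx.
Qed.

Lemma lead_cross u w c d : c != d ->
  (rcons u c == 2 :: behead (rcons u c)) && (rcons w d == [:: 1, 0 & behead (rcons u c)]) ->
  [/\ u = [::], c = 2, w = [:: 1] & d = 0].
Proof.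
case: u => [|e u] /= ncd.
  rewrite (_ : [:: 1; 0] = rcons [:: 1] 0) // eqseq_rcons eqseq_cons andbT.
  by move=> /andP [/eqP -> /andP [/eqP -> /eqP ->]].
rewrite (_ : [:: 1, 0 & rcons u c] = rcons [:: 1, 0 & u] c) // eqseq_rcons.
by move=> /andP [_ /andP [_ /eqP e2]]; rewrite e2 eqxx in ncd.
Qed.

Lemma C1 u w : arc_to (rcons u 0) (rcons w 2) = false.
Proof.
apply/negbTE/orP => -[/infix_cross | /lead_cross] => // - [] // x [].
by rewrite cat2 => /rcons_inj [].
Qed.

Lemma C1' u w : arc_tto (rcons u 0) (rcons w 2) = false.
Proof.
apply/negbTE/negP => /infix_cross - [] // x [].
by rewrite cat2 => /rcons_inj [].
Qed.

Lemma C2 u w : arc_tto (rcons w 2) (rcons (rcons u 1) 0) = false.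
Proof.
apply/negbTE/negP => /infix_cross - [] // x [] _.
by rewrite cat2 => /rcons_inj [] /rcons_inj [].
Qed.

Lemma C3 u w : arc_to (rcons w 2) (rcons (rcons u 1) 0) = ((w == [::]) && (u == [::])) || (w == rcons u 0).
Proof.
apply/idP/idP.
  case/orP => [/infix_cross | /lead_cross].
    move=> /(_ isT) [x [h1 h2]]; move: h1 h2; rewrite !cat2 => /rcons_inj [->] /rcons_inj [h3].
    by move/rcons_inj: h3 => [->]; rewrite eqxx orbT.
  move=> /(_ isT) [-> _ hu _]; rewrite eqxx /=; apply/orP; left.
  by case: u hu => [|e [|f u]].
case/orP => [/andP [/eqP -> /eqP ->] // | /eqP ->].
apply/orP; left; apply/infix_stepP; exists u, [::].
by rewrite !cats0 !cat2.
Qed.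

Lemma C4 u w : arc_to (rcons (rcons u 1) 2) (rcons w 0) = false.
Proof.
apply/negbTE/orP => -[/infix_cross | /lead_cross] => // - [] //.
  by move=> x [h1 h2]; move: h1; rewrite cat2 => /rcons_inj [] /rcons_inj [].
by case: u.
Qed.

Lemma C5 u w : arc_tto (rcons (rcons u 1) 2) (rcons w 0) = (w == rcons u 2).
Proof.
apply/idP/idP.
  move=> /infix_cross; case=> // x [h1 h2]; move: h1 h2; rewrite !cat2 => /rcons_inj [/rcons_inj [->]].
  by move=> /rcons_inj [->].
move=> /eqP ->; apply/infix_stepP; exists u, [::].
by rewrite !cats0 !cat2.
Qed.

Set Implicit Arguments. Unset Strict Implicit.

Definition A (R : seq nat -> seq nat -> bool) (s t : seq (seq nat)) :=
  \sum_(u <- s) count (R u) t.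

Lemma a_def n : a n = A arc_to (H n) (H n) + A arc_tto (H n) (H n).
Proof. by []. Qed.

Lemma mem_H n x : (x \in H n) = is_hyper n x.
Proof. by rewrite -has_pred1 has_count count_H lt0b. Qed.

Lemma H_uniq n : uniq (H n).
Proof. by apply: count_mem_uniq => x; rewrite count_H mem_H. Qed.

Lemma A_perm R s s' t t' : perm_eq s s' -> perm_eq t t' -> A R s t = A R s' t'.
Proof.
move=> ps pt; rewrite /A (perm_big _ ps); apply: eq_bigr => u _.
exact: (permP pt).
Qed.

Arguments A_perm {R s s' t t'}.

Lemma A_catl R s1 s2 t : A R (s1 ++ s2) t = A R s1 t + A R s2 t.
Proof. by rewrite /A big_cat. Qed.

Lemma A_catr R s t1 t2 : A R s (t1 ++ t2) = A R s t1 + A R s t2.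
Proof. by rewrite /A -big_split; apply: eq_bigr => u _; rewrite count_cat. Qed.

Lemma A_map R f g s t :
  A R (map f s) (map g t) = A (fun x y => R (f x) (g y)) s t.
Proof. by rewrite /A big_map; apply: eq_bigr => u _; rewrite count_map. Qed.

Lemma A_mapl R f s t : A R (map f s) t = A (fun x y => R (f x) y) s t.
Proof. by rewrite /A big_map. Qed.

Lemma A_mapr R g s t : A R s (map g t) = A (fun x y => R x (g y)) s t.
Proof. by apply: eq_bigr => u _; rewrite count_map. Qed.

Lemma A_ext R R' s t : (forall x y, R x y = R' x y) -> A R s t = A R' s t.
Proof. by move=> h; apply: eq_bigr => u _; apply: eq_count => w; apply: h. Qed.

Lemma A_false R s t : (forall x y, R x y = false) -> A R s t = 0.
Proof.
move=> h; rewrite /A big1 // => u _.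
by rewrite (eq_count (a2 := pred0)) ?count_pred0 // => w; apply: h.
Qed.

Lemma sum_count (T : Type) (P : pred T) t : \sum_(y <- t) (P y : nat) = count P t.
Proof. by elim: t => [|y t IH]; rewrite ?big_nil ?big_cons ?IH. Qed.

Lemma A_swap R s t : A R s t = A (fun y x => R x y) t s.
Proof.
rewrite /A; elim: s => [|x s IH].
  by rewrite big_nil big1.
rewrite big_cons IH.
by rewrite big_split sum_count.
Qed.

Lemma A_same R c s : (forall u w, R (rcons u c) (rcons w c) = R u w) ->
  A R (map (rcons^~ c) s) (map (rcons^~ c) s) = A R s s.
Proof. by move=> h; rewrite A_map; apply: A_ext. Qed.

Lemma b_odd n : b (2 * n + 1) = b n.
Proof. by rewrite /b (perm_size (H_odd n)) size_map. Qed.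

Lemma b_even m : b (2 * m + 2) = b (m + 1) + b m.
Proof. by rewrite /b (perm_size (H_even m)) size_cat !size_map. Qed.

Lemma a_odd n : a (2 * n + 1) = a n.
Proof.
rewrite !a_def !(A_perm (H_odd n) (H_odd n)).
by rewrite !A_same // => *; rewrite ?arc_to_same ?arc_tto_same.
Qed.

Lemma H_4n2 n : perm_eq (H (4 * n + 2))
  (map (rcons^~ 0) (map (rcons^~ 1) (H n)) ++ map (rcons^~ 2) (H (2 * n))).
Proof.
have -> : 4 * n + 2 = 2 * (2 * n) + 2 by lia.
apply: perm_trans (H_even _) _.
by rewrite perm_cat2r; apply: perm_map; apply: H_odd.
Qed.

Lemma H_4n4 n : perm_eq (H (4 * n + 4))
  (map (rcons^~ 0) (H (2 * n + 2)) ++ map (rcons^~ 2) (map (rcons^~ 1) (H n))).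
Proof.
have -> : 4 * n + 4 = 2 * (2 * n + 1) + 2 by lia.
apply: perm_trans (H_even _) _.
have -> : 2 * n + 1 + 1 = 2 * n + 2 by lia.
by rewrite perm_cat2l; apply: perm_map; apply: H_odd.
Qed.

Lemma b_4n2 n : b (4 * n + 2) = b n + b (2 * n).
Proof. by rewrite /b (perm_size (H_4n2 n)) size_cat !size_map. Qed.

Lemma b_4n4 n : b (4 * n + 4) = b (2 * n + 2) + b n.
Proof. by rewrite /b (perm_size (H_4n4 n)) size_cat !size_map. Qed.

Lemma sum_ones (s : seq (seq nat)) F : (forall x, x \in s -> F x = 1) ->
  \sum_(x <- s) F x = size s.
Proof. by move=> h; rewrite -sum1_size; apply: eq_big_seq. Qed.

Lemma a_4n2 n : a (4 * n + 2) = a (2 * n) + a n + b n.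
Proof.
rewrite !a_def !(A_perm (H_4n2 n) (H_4n2 n)) !A_catl !A_catr.
rewrite !A_same; try (move=> *; apply: arc_to_same); try (move=> *; apply: arc_tto_same).
set S1 := map _ (map _ (H n)); set S2 := map _ (H (2 * n)).
have e1 : A arc_to S1 S2 = 0 by rewrite !A_map; apply: A_false => x y /=; apply: C1.
have e2 : A arc_tto S1 S2 = 0 by rewrite !A_map; apply: A_false => x y /=; apply: C1'.
have e3 : A arc_tto S2 S1 = 0 by rewrite !A_mapl !A_mapr; apply: A_false => x y /=; apply: C2.
have e4 : A arc_to S2 S1 = b n.
  rewrite !A_mapl !A_mapr (A_ext (R' := fun x y => ((x == [::]) && (y == [::])) || (x == rcons y 0))); last by move=> *; apply: C3.
  rewrite A_swap /A (sum_ones (s := H n)) // => x xH.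
  rewrite mem_H in xH.
  rewrite (eq_in_count (a2 := pred1 (if x == [::] then [::] else rcons x 0))).
    rewrite count_H; case: (x =P [::]) xH => [->|nx].
      by rewrite !is_hyper_nil => /eqP ->.
    rewrite is_hyper_rcons !is_hyperE; move/eqP: nx => nx; lia.
  move=> y; rewrite mem_H => hy /=; case: (x =P [::]) => [->|nx].
    by rewrite andbT; case: (y =P [:: 0]) hy => [-> //|_]; rewrite orbF.
  by rewrite andbF.
rewrite e1 e2 e3 e4; lia.
Qed.

Lemma a_4n4 n : a (4 * n + 4) = a (2 * n + 2) + a n + b n.
Proof.
rewrite !a_def !(A_perm (H_4n4 n) (H_4n4 n)) !A_catl !A_catr.
rewrite !A_same; try (move=> *; apply: arc_to_same); try (move=> *; apply: arc_tto_same).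
set S1 := map _ (H (2 * n + 2)); set S2 := map _ (map _ (H n)).
have e1 : A arc_to S1 S2 = 0 by rewrite !A_mapl !A_mapr; apply: A_false => x y /=; apply: C1.
have e2 : A arc_tto S1 S2 = 0 by rewrite !A_mapl !A_mapr; apply: A_false => x y /=; apply: C1'.
have e3 : A arc_to S2 S1 = 0 by rewrite !A_mapl !A_mapr; apply: A_false => x y /=; apply: C4.
have e4 : A arc_tto S2 S1 = b n.
  rewrite !A_mapl !A_mapr (A_ext (R' := fun x y => y == rcons x 2)); last by move=> *; apply: C5.
  rewrite /A (sum_ones (s := H n)) // => x xH.
  rewrite mem_H in xH.
  rewrite (eq_count (a2 := pred1 (rcons x 2))) // count_H.
  by rewrite is_hyper_even xH orbT.
rewrite e1 e2 e3 e4; lia.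
Qed.

Local Open Scope ring_scope.

Theorem mainTheorem1 :
  (* v satisfies the conditions *)
  [/\ v 0 = 0,
      (forall n : nat, v (2 * n + 1)%N = v n),
      (forall n : nat, v (4 * n + 2)%N = v (2 * n)%N + v n + (b n)%:Z - 1)
    & (forall n : nat, v (4 * n + 4)%N = v (2 * n + 2)%N + v n + (b n)%:Z - 1)]
  /\
  (* equivalent forms via a(n) *)
  (forall n : nat, v (4 * n + 2)%N = v (2 * n)%N + (a n)%:Z
                /\ v (4 * n + 4)%N = v (2 * n + 2)%N + (a n)%:Z)
  /\
  (* v is determined by the conditions *)
  (forall f : nat -> int,
      f 0%N = 0 ->
      (forall n : nat, f (2 * n + 1)%N = f n) ->
      (forall n : nat, f (4 * n + 2)%N = f (2 * n)%N + f n + (b n)%:Z - 1) ->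
      (forall n : nat, f (4 * n + 4)%N = f (2 * n + 2)%N + f n + (b n)%:Z - 1) ->
      forall n : nat, f n = v n).
Proof.
have v0 : v 0 = 0 by rewrite /v /a /= !big_cons !big_nil.
have v1 : forall n, v (2 * n + 1)%N = v n by move=> n; rewrite /v a_odd b_odd.
have v2 : forall n, v (4 * n + 2)%N = v (2 * n)%N + v n + (b n)%:Z - 1.
  by move=> n; rewrite /v a_4n2 b_4n2; lia.
have v4 : forall n, v (4 * n + 4)%N = v (2 * n + 2)%N + v n + (b n)%:Z - 1.
  by move=> n; rewrite /v a_4n4 b_4n4; lia.
split; first by split.
split.
  by move=> n; rewrite /v a_4n2 b_4n2 a_4n4 b_4n4; split; lia.
move=> f f0 f1 f2 f4 n.
elim: n {-2}n (leqnn n) => [|N IH] n hn.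
  by move: hn; rewrite leqn0 => /eqP ->; rewrite f0.
case: n hn => [|n] hn; first by rewrite f0.
have : (n.+1 %% 4 < 4)%N by rewrite ltn_mod.
have e := divn_eq n.+1 4.
set q := (n.+1 %/ 4)%N in e *; set r := (n.+1 %% 4)%N in e *.
case: r e => [|[|[|[|r]]]] e _ //.
- have -> : n.+1 = (4 * (q - 1) + 4)%N by lia.
  rewrite f4 v4 !IH //; lia.
- have -> : n.+1 = (2 * (2 * q) + 1)%N by lia.
  rewrite f1 v1 IH //; lia.
- have -> : n.+1 = (4 * q + 2)%N by lia.
  rewrite f2 v2 !IH //; lia.
- have -> : n.+1 = (2 * (2 * q + 1) + 1)%N by lia.
  rewrite f1 v1 IH //; lia.
Qed.
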